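(* Let $R$ be a finite set of terminal pairs in $\mathbb{R}^2$ such that every pair $(l,r)\in R$ satisfies $x(l)<0\le x(r)$, let $N_{\mathrm{opt}}$ be an optimum solution of 2D-GMMN for $R$, and let $N^{+}_{\mathrm{hor}}$ be the set of horizontal segments of the right part of $N_{\mathrm{opt}}$. Let $(P_x)_{x\ge0}$ be the piercings produced by the sweep described in the context. Then for every $x\ge 0$, $$|P_x|\le 2\cdot\Big|\ell_x\cap \bigcup N^{+}_{\mathrm{hor}}\Big|.$$
   Context: A rectilinear network is a finite union of axis-parallel segments; an M-path between $p,q$ is a path of axis-parallel segments of total length $\|p-q\|_1$. An optimum solution of 2D-GMMN for a set $R$ of unordered point pairs is a minimum-length rectilinear network containing an M-path between the two points of every pair. Each pair is identified with its bounding box (smallest axis-parallel rectangle containing both points). The right part of a geometric object is its intersection with the closed half-plane $\{x\ge 0\}$; the right part of a set of objects is the set of right parts; $R^+$ denotes the right part of (the bounding boxes of) $R$. For $x\ge0$, $\ell_x$ is the vertical line at abscissa $x$, and $\mathcal{I}_x$ is the set of (nonempty) intervals $\ell_x\cap r$, $r\in R^+$. A piercing of $\mathcal{I}_x$ is a finite set of points on $\ell_x$ such that every interval of $\mathcal{I}_x$ contains one of them; it is minimal if no proper subset is a piercing. The sweep: event points are the $x$-coordinates of the right edges of the rectangles in $R^+$. $P_0$ is an arbitrary minimal piercing of $\mathcal{I}_0$. For consecutive event points $x'<x''$ and $x'<x\le x''$, $P_x$ is obtained from (the horizontal translate to $\ell_x$ of) $P_{x'}$ by iteratively removing points as long as the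 remaining set still pierces $\mathcal{I}_x$, stopping when it is a minimal piercing of $\mathcal{I}_x$ (the same set of $y$-coordinates is used for all $x\in(x',x'']$). After the last event point, $\mathcal{I}_x=\emptyset$ and $P_x=\emptyset$. *)

(* Defs.v *)
From Stdlib Require Import Reals Lra Lia List.
Import ListNotations.
Open Scope R_scope.

Definition point : Type := (R * R)%type.
Definition px (p : point) : R := fst p.
Definition py (p : point) : R := snd p.
Definition l1 (p q : point) : R := Rabs (px p - px q) + Rabs (py p - py q).

Definition segment : Type := (point * point)%type.
Definition axis_parallel (s : segment) : Prop :=
  px (fst s) = px (snd s) \/ py (fst s) = py (snd s).
Definition horizontal (s : segment) : Prop :=
  py (fst s) = py (snd s) /\ px (fst s) <> px (snd s).
(** Point [p] lies on the axis-parallel segment [s] (its bounding box). *)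
Definition on_seg (p : point) (s : segment) : Prop :=
  Rmin (px (fst s)) (px (snd s)) <= px p <= Rmax (px (fst s)) (px (snd s)) /\
  Rmin (py (fst s)) (py (snd s)) <= py p <= Rmax (py (fst s)) (py (snd s)).
Definition seg_length (s : segment) : R := l1 (fst s) (snd s).

Definition network : Type := list segment.
Definition rectilinear (N : network) : Prop := forall s, In s N -> axis_parallel s.
Definition in_net (N : network) (p : point) : Prop := exists s, In s N /\ on_seg p s.
Definition net_length (N : network) : R := fold_right (fun s acc => seg_length s + acc) 0 N.

Fixpoint path_in (N : network) (a : point) (vs : list point) : Prop :=
  match vs with
  | [] => True
  | b :: vs' => axis_parallel (a, b) /\ (forall p, on_seg p (a, b) -> in_net N p)
                /\ path_in N b vs'
  end.
Fixpoint path_len (a : point) (vs : list point) : R :=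
  match vs with
  | [] => 0
  | b :: vs' => l1 a b + path_len b vs'
  end.
Definition M_path (N : network) (p q : point) : Prop :=
  exists vs : list point,
    path_in N p vs /\ last vs p = q /\ path_len p vs = l1 p q.

Definition pairs : Type := list (point * point).
Definition feasible (Rp : pairs) (N : network) : Prop :=
  rectilinear N /\ forall pr, In pr Rp -> M_path N (fst pr) (snd pr).
Definition optimal (Rp : pairs) (N : network) : Prop :=
  feasible Rp N /\ forall N', feasible Rp N' -> net_length N <= net_length N'.

Definition crossing (Rp : pairs) : Prop :=
  forall pr, In pr Rp -> px (fst pr) < 0 <= px (snd pr).

(** For x >= 0, the interval l_x ∩ (right part of the bounding box of pr)
    is nonempty iff x <= x(r), and is then [ymin, ymax]. *)
Definition in_Ix (pr : point * point) (x : R) : Prop := 0 <= x <= px (snd pr).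
Definition ylo (pr : point * point) : R := Rmin (py (fst pr)) (py (snd pr)).
Definition yhi (pr : point * point) : R := Rmax (py (fst pr)) (py (snd pr)).

(** Finite point sets on l_x are represented by duplicate-free lists of
    y-coordinates. *)
Definition pierces (Rp : pairs) (x : R) (P : list R) : Prop :=
  forall pr, In pr Rp -> in_Ix pr x -> exists y, In y P /\ ylo pr <= y <= yhi pr.
Definition minimal_piercing (Rp : pairs) (x : R) (P : list R) : Prop :=
  NoDup P /\ pierces Rp x P /\
  (forall Q : list R, incl Q P -> ~ incl P Q -> ~ pierces Rp x Q).

Inductive removal_reach (Rp : pairs) (x : R) (P : list R) : list R -> Prop :=
  | rr_refl : removal_reach Rp x P P
  | rr_step : forall Q q, removal_reach Rp x P Q -> In q Q ->
      pierces Rp x (remove Req_EM_T q Q) ->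
      removal_reach Rp x P (remove Req_EM_T q Q).

(** Event points: x-coordinates of the right edges of the rectangles of R^+;
    the sweep starts at 0. *)
Definition event (Rp : pairs) (e : R) : Prop := exists pr, In pr Rp /\ e = px (snd pr).
Definition sweep_point (Rp : pairs) (e : R) : Prop := e = 0 \/ event Rp e.

Definition sweep_run (Rp : pairs) (P : R -> list R) : Prop :=
  minimal_piercing Rp 0 (P 0) /\
  (forall x' x'', sweep_point Rp x' -> sweep_point Rp x'' -> x' < x'' ->
     (forall e, sweep_point Rp e -> ~ (x' < e < x'')) ->
     forall x, x' < x <= x'' ->
       P x = P x'' /\ removal_reach Rp x (P x') (P x) /\ minimal_piercing Rp x (P x)) /\
  (forall x, 0 <= x -> (forall e, event Rp e -> e < x) -> P x = []).

(** Points of l_x ∩ ⋃ N^+_hor: points with abscissa >= 0 on a horizontal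
    segment of N (the right part of a horizontal segment). *)
Definition right_hor_point (N : network) (p : point) : Prop :=
  0 <= px p /\ exists s, In s N /\ horizontal s /\ on_seg p s.

(* Main.v *)
Require Import Defs.
From Stdlib Require Import Reals List Lra Lia Classical ClassicalEpsilon.
Import ListNotations.
Open Scope R_scope.

Lemma notin_int a b p : ~ (a <= p <= b) -> p < a \/ b < p.
Proof. intros H. destruct (Rlt_le_dec p a); [left; lra|].
  destruct (Rlt_le_dec b p); [right; lra|]. exfalso; apply H; lra. Qed.

Lemma three p1 p2 p3 h a1 b1 a2 b2 a3 b3 :
  a1 <= p1 <= b1 -> a1 <= h <= b1 ->
  a2 <= p2 <= b2 -> a2 <= h <= b2 ->
  a3 <= p3 <= b3 -> a3 <= h <= b3 ->
  (p2 < a1 \/ b1 < p2) -> (p3 < a1 \/ b1 < p3) ->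
  (p1 < a2 \/ b2 < p1) -> (p3 < a2 \/ b2 < p3) ->
  (p1 < a3 \/ b3 < p1) -> (p2 < a3 \/ b3 < p2) -> False.
Proof. intros; repeat match goal with H : _ \/ _ |- _ => destruct H end; lra. Qed.

Section Count.
Variable g : R -> R.
Definition geq (h p : R) : bool := if Req_EM_T (g p) h then true else false.

Lemma filter_split (f : R -> bool) (P : list R) :
  length P = (length (filter f P) + length (filter (fun p => negb (f p)) P))%nat.
Proof. induction P as [|a P IH]; simpl; auto. destruct (f a); simpl; lia. Qed.

Lemma count_bound : forall L P, NoDup P ->
  (forall p, In p P -> In (g p) L) ->
  (forall h Q, NoDup Q -> (forall q, In q Q -> In q P /\ g q = h) -> (length Q <= 2)%nat) ->
  (length P <= 2 * length L)%nat.
Proof.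
  induction L as [|h L IH]; intros P HP Hin H2.
  - destruct P as [|p P]; simpl; [lia|]. exfalso. apply (Hin p); simpl; auto.
  - rewrite (filter_split (geq h) P).
    assert (A: (length (filter (geq h) P) <= 2)%nat).
    { apply (H2 h). apply NoDup_filter; auto. intros q Hq. apply filter_In in Hq as [Hq1 Hq2].
      split; auto. unfold geq in Hq2. destruct (Req_EM_T (g q) h); auto; discriminate. }
    assert (B: (length (filter (fun p => negb (geq h p)) P) <= 2 * length L)%nat).
    { apply IH. apply NoDup_filter; auto.
      - intros p Hp. apply filter_In in Hp as [Hp1 Hp2]. destruct (Hin p Hp1) as [E|E]; auto.
        unfold geq in Hp2. destruct (Req_EM_T (g p) h); [discriminate| congruence].
      - intros h' Q HQ HQ'. apply (H2 h'); auto. intros q Hq. destruct (HQ' q Hq) as [X Y].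
        apply filter_In in X as [X _]. auto. }
    simpl. lia.
Qed.
End Count.

Lemma len_le2 (Q : list R) :
  NoDup Q -> (forall q1 q2 q3, In q1 Q -> In q2 Q -> In q3 Q -> q1 <> q2 -> q1 <> q3 -> q2 <> q3 -> False) -> (length Q <= 2)%nat.
Proof.
  intros HN H. destruct Q as [|q1 [|q2 [|q3 Q]]]; simpl; try lia.
  exfalso. apply NoDup_cons_iff in HN as [N1 HN]. apply NoDup_cons_iff in HN as [N2 HN].
  apply (H q1 q2 q3); simpl; auto; intro E; subst; simpl in *; tauto.
Qed.

Lemma l1_triang a b c : l1 a c <= l1 a b + l1 b c.
Proof. unfold l1. pose proof (Rabs_triang (px a - px b) (px b - px c)).
  pose proof (Rabs_triang (py a - py b) (py b - py c)).
  replace (px a - px c) with ((px a - px b) + (px b - px c)) by ring.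
  replace (py a - py c) with ((py a - py b) + (py b - py c)) by ring. lra. Qed.

Lemma last_nonempty (vs : list point) c a b : last (c :: vs) a = last (c :: vs) b.
Proof. revert c. induction vs as [|d vs IH]; intros c; [reflexivity|]. change (last (d :: vs) a = last (d :: vs) b). apply IH. Qed.

Lemma last_cons_default (vs : list point) a b : last (b :: vs) a = last vs b.
Proof. destruct vs; simpl; auto. apply last_nonempty. Qed.

Lemma path_len_ge : forall vs a, l1 a (last vs a) <= path_len a vs.
Proof.
  induction vs as [|b vs IH]; intros a; cbn [path_len].
  - simpl. unfold l1. replace (px a - px a) with 0 by ring. replace (py a - py a) with 0 by ring.
    rewrite Rabs_R0. lra.
  - specialize (IH b).
    pose proof (l1_triang a b (last vs b)). rewrite last_cons_default. lra.
Qed.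

Definition hor_at (N : network) (x y : R) : Prop :=
  exists s, In s N /\ horizontal s /\ on_seg (x, y) s.

Lemma seg_case s x y a0 : axis_parallel s -> a0 < x ->
  (horizontal s /\ on_seg (x, y) s) \/
  exists a1, a0 <= a1 < x /\ forall t, a1 < t < x -> ~ on_seg (t, y) s.
Proof.
  destruct s as [[x1 y1] [x2 y2]]. unfold axis_parallel, horizontal, on_seg, px, py; simpl.
  intros Hs Ha.
  destruct (Req_dec x1 x2) as [E|E].
  - subst x2. destruct (Rlt_le_dec x1 x).
    + right. exists (Rmax a0 x1). split. split; [apply Rmax_l|apply Rmax_lub_lt; auto].
      intros t Ht [[A B] _]. pose proof (Rmax_r a0 x1).
      unfold Rmax, Rmin in A, B. destruct (Rle_dec x1 x1); lra.
    + right. exists a0. split; [lra|]. intros t Ht [[A B] _].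
      unfold Rmin in A. destruct (Rle_dec x1 x1); lra.
  - destruct Hs as [Hs|Hs]; [contradiction|]. subst y2.
    destruct (Req_dec y y1) as [Ey|Ey].
    + subst y1.
      destruct (Rlt_le_dec (Rmax x1 x2) x) as [H1|H1].
      * right. exists (Rmax a0 (Rmax x1 x2)). split. split; [apply Rmax_l|apply Rmax_lub_lt; auto].
        intros t Ht [[A B] _]. pose proof (Rmax_r a0 (Rmax x1 x2)). lra.
      * destruct (Rlt_le_dec x (Rmin x1 x2)) as [H2|H2].
        -- right. exists a0. split; [lra|]. intros t Ht [[A B] _]. lra.
        -- left. split; [split; auto|]. split; [lra|].
           unfold Rmin, Rmax; destruct (Rle_dec y y); lra.
    + right. exists a0. split; [lra|]. intros t Ht [_ [A B]].
      unfold Rmin, Rmax in *; destruct (Rle_dec y1 y1); lra.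
Qed.

Lemma cover : forall N x y a0, rectilinear N -> a0 < x ->
  (forall t, a0 < t < x -> in_net N (t, y)) -> hor_at N x y.
Proof.
  induction N as [|s N IH]; intros x y a0 HR Ha Ht.
  - destruct (Ht ((a0+x)/2)) as [s [[] _]]; lra.
  - assert (HRN : rectilinear N) by (intros s' Hs'; apply HR; simpl; auto).
    assert (Hs : axis_parallel s) by (apply HR; simpl; auto).
    destruct (seg_case s x y a0 Hs Ha) as [[H1 H2]|[a1 [Ha1 Hn]]].
    + exists s. split; [left; auto| auto].
    + destruct (IH x y a1 HRN (proj2 Ha1)) as [s' Hs'].
      * intros t Ht'. destruct (Ht t ltac:(lra)) as [s' [[E|E] Ho]].
        -- subst s'. exfalso. apply (Hn t Ht' Ho).
        -- exists s'; auto.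
      * exists s'. destruct Hs' as [A B]. split; [right; auto| auto].
Qed.

Ltac l1tac := unfold l1, Rabs, px, py in *; simpl in *;
  repeat match goal with |- context [Rcase_abs ?a] => destruct (Rcase_abs a) end;
  repeat match goal with H : context [Rcase_abs ?a] |- _ => destruct (Rcase_abs a) end; lra.

Lemma path_cross N x : forall vs a, rectilinear N -> path_in N a vs -> px a < x ->
  x <= px (last vs a) ->
  exists y, hor_at N x y /\ l1 a (x,y) + l1 (x,y) (last vs a) <= path_len a vs.
Proof.
  induction vs as [|b vs IH]; intros a HR Hp Ha Hl.
  - simpl in Hl. lra.
  - simpl in Hp. destruct Hp as [Hab [Hon Hp]]. rewrite last_cons_default in *. simpl path_len.
    destruct (Rle_dec x (px b)) as [Hxb|Hxb].
    + assert (Hy : py a = py b).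
      { destruct Hab as [E|E]; simpl in E; [lra| exact E]. }
      exists (py a). split.
      * apply (cover N x (py a) (px a) HR Ha). intros t Ht. apply Hon.
        unfold on_seg, px, py in *; simpl in *. rewrite <- Hy.
        unfold Rmin, Rmax; destruct (Rle_dec (fst a) (fst b)); destruct (Rle_dec (snd a) (snd a)); lra.
      * pose proof (path_len_ge vs b). pose proof (l1_triang (x, py a) b (last vs b)).
        assert (l1 a (x, py a) = x - px a) by l1tac.
        assert (l1 (x, py a) b = px b - x) by l1tac.
        assert (l1 a b = px b - px a) by l1tac.
        lra.
    + assert (px b < x) by lra. destruct (IH b HR Hp H Hl) as [y [Hy Hb]]. exists y. split; auto.
      pose proof (l1_triang a b (x,y)). lra.
Qed.

Lemma H_pierces Rp N x : crossing Rp -> feasible Rp N -> 0 <= x ->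
  forall pr, In pr Rp -> in_Ix pr x -> exists y, hor_at N x y /\ ylo pr <= y <= yhi pr.
Proof.
  intros Hc [HR HM] Hx pr Hin HI.
  destruct (Hc pr Hin) as [Hl Hr]. destruct (HM pr Hin) as [vs [Hp [Hlast Hlen]]].
  destruct HI as [_ HI].
  assert (px (fst pr) < x) by lra.
  destruct (path_cross N x vs (fst pr) HR Hp H) as [y [Hy Hb]]. { rewrite Hlast; lra. }
  exists y; split; auto. rewrite Hlast, Hlen in Hb.
  destruct pr as [l r]; simpl in *. unfold ylo, yhi; simpl.
  unfold Rmin, Rmax; destruct (Rle_dec (py l) (py r)); l1tac.
Qed.

Lemma exists_L N x : exists L, forall y, In y L <-> hor_at N x y.
Proof.
  induction N as [|s N [L HL]].
  - exists []. intros y; split; [intros []| intros [s [[] _]]].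
  - destruct (classic (horizontal s /\ Rmin (px (fst s)) (px (snd s)) <= x <= Rmax (px (fst s)) (px (snd s)))) as [Hs|Hs].
    + exists (py (fst s) :: L). intros y. split.
      * intros [E|E].
        -- exists s. split; [left; auto|]. split; [tauto|]. destruct Hs as [[Hh _] Hx].
           split; auto. simpl. rewrite <- E, <- Hh. unfold Rmin, Rmax.
           destruct (Rle_dec (py (fst s)) (py (fst s))); lra.
        -- apply HL in E. destruct E as [s' [? ?]]. exists s'; split; [right|]; auto.
      * intros [s' [[E|E] [Hh Ho]]].
        -- subst s'. left. destruct Ho as [_ Ho]. simpl in Ho. destruct Hh as [Hh _].
           rewrite <- Hh in Ho. unfold Rmin, Rmax in Ho.
           destruct (Rle_dec (py (fst s)) (py (fst s))); lra.
        -- right. apply HL. exists s'; auto.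
    + exists L. intros y. rewrite HL. split.
      * intros [s' [A B]]. exists s'; split; [right|]; auto.
      * intros [s' [[E|E] [Hh Ho]]].
        -- subst s'. exfalso. apply Hs. split; auto. apply Ho.
        -- exists s'; auto.
Qed.

Lemma min_ge (l : list R) x : (exists e, In e l /\ x <= e) ->
  exists m, In m l /\ x <= m /\ forall e, In e l -> x <= e -> m <= e.
Proof.
  induction l as [|a l IH]; intros [e [He Hx]]; [destruct He|].
  destruct (Rle_dec x a) as [Ha|Ha].
  - destruct (classic (exists e, In e l /\ x <= e)) as [Hex|Hex].
    + destruct (IH Hex) as [m [Hm [Hxm Hmin]]]. destruct (Rle_dec a m).
      * exists a. split; [left; auto|]. split; auto.
        intros e' [E|E] He'; [subst; lra| specialize (Hmin e' E He'); lra].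
      * exists m. split; [right; auto|]. split; auto.
        intros e' [E|E] He'; [subst; lra| auto].
    + exists a. split; [left;auto|]. split; auto.
      intros e' [E|E] He'; [subst; lra| exfalso; apply Hex; eauto].
  - destruct He as [E|E]; [subst; lra|].
    destruct (IH (ex_intro _ e (conj E Hx))) as [m [Hm [Hxm Hmin]]].
    exists m. split; [right; auto|]. split; auto. intros e' [E'|E'] He'; [subst; lra| auto].
Qed.

Lemma max_lt (l : list R) x : (exists e, In e l /\ e < x) ->
  exists m, In m l /\ m < x /\ forall e, In e l -> e < x -> e <= m.
Proof.
  induction l as [|a l IH]; intros [e [He Hx]]; [destruct He|].
  destruct (Rlt_le_dec a x) as [Ha|Ha].
  - destruct (classic (exists e, In e l /\ e < x)) as [Hex|Hex].
    + destruct (IH Hex) as [m [Hm [Hxm Hmin]]]. destruct (Rle_dec m a).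
      * exists a. split; [left; auto|]. split; auto.
        intros e' [E|E] He'; [subst; lra| specialize (Hmin e' E He'); lra].
      * exists m. split; [right; auto|]. split; auto.
        intros e' [E|E] He'; [subst; lra| auto].
    + exists a. split; [left;auto|]. split; auto.
      intros e' [E|E] He'; [subst; lra| exfalso; apply Hex; eauto].
  - destruct He as [E|E]; [subst; lra|].
    destruct (IH (ex_intro _ e (conj E Hx))) as [m [Hm [Hxm Hmin]]].
    exists m. split; [right; auto|]. split; auto. intros e' [E'|E'] He'; [subst; lra| auto].
Qed.

Lemma sweep_state Rp P x : sweep_run Rp P -> 0 <= x -> P x = [] \/ minimal_piercing Rp x (P x).
Proof.
  intros [H0 [Hstep Hend]] Hx.
  set (l := 0 :: map (fun pr => px (snd pr)) Rp).
  assert (Hsp : forall e, sweep_point Rp e <-> In e l).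
  { intros e. unfold sweep_point, event, l. simpl. rewrite in_map_iff. split.
    - intros [E|[pr [Hin E]]]; [left; auto| right; exists pr; auto].
    - intros [E|[pr [E Hin]]]; [left; auto| right; exists pr; auto]. }
  destruct (Req_dec x 0) as [E|Hx0]. { subst. right; auto. }
  destruct (classic (exists e, event Rp e /\ x <= e)) as [Hex|Hex].
  - right. destruct (min_ge l x) as [x2 [Hx2 [Hxx2 Hmin]]].
    { destruct Hex as [e [He Hxe]]. exists e. split; auto. apply Hsp; right; auto. }
    destruct (max_lt l x) as [x1 [Hx1 [Hx1x Hmax]]].
    { exists 0. split; [left; auto| lra]. }
    apply Hsp in Hx1. apply Hsp in Hx2.
    refine (proj2 (proj2 (Hstep x1 x2 Hx1 Hx2 _ _ x _))); try lra.
    intros e He [A B]. apply Hsp in He. destruct (Rlt_le_dec e x).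
    + specialize (Hmax e He r). lra.
    + specialize (Hmin e He r). lra.
  - left. apply Hend; auto. intros e He. destruct (Rlt_le_dec e x); auto.
    exfalso; apply Hex; eauto.
Qed.

Theorem mainTheorem11 (Rp : pairs) (Nopt : network) (P : R -> list R) :
  crossing Rp -> optimal Rp Nopt -> sweep_run Rp P ->
  forall x : R, 0 <= x ->
    exists L : list R,
      NoDup L /\ (forall y, In y L <-> right_hor_point Nopt (x, y)) /\
      (length (P x) <= 2 * length L)%nat.
Proof.
  intros Hc Hopt Hsw x Hx.
  destruct (exists_L Nopt x) as [L0 HL0].
  set (L := nodup Req_EM_T L0).
  assert (HL : forall y, In y L <-> hor_at Nopt x y).
  { intros y. unfold L. rewrite nodup_In. apply HL0. }
  exists L. split; [apply NoDup_nodup|]. split.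
  { intros y. rewrite HL. unfold right_hor_point, hor_at; simpl.
    split; [intros; split; auto| intros [_ H]; exact H]. }
  destruct (sweep_state Rp P x Hsw Hx) as [E|[HN [Hpi Hmin]]].
  { rewrite E. simpl. lia. }
  set (Px := P x) in *.
  set (W := fun p h => In h L /\ exists a b, a <= p <= b /\ a <= h <= b /\
                          forall q, In q Px -> a <= q <= b -> q = p).
  assert (Hpriv : forall p, In p Px -> exists h, W p h).
  { intros p Hp.
    assert (Hnp : ~ pierces Rp x (remove Req_EM_T p Px)).
    { apply Hmin.
      - intros q Hq. apply in_remove in Hq. tauto.
      - intros Hinc. specialize (Hinc p Hp). apply in_remove in Hinc. tauto. }
    apply not_all_ex_not in Hnp. destruct Hnp as [pr Hpr].
    apply imply_to_and in Hpr as [Hin Hpr]. apply imply_to_and in Hpr as [HI Hpr].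
    destruct (H_pierces Rp Nopt x Hc (proj1 Hopt) Hx pr Hin HI) as [h [Hh Hhb]].
    exists h. split; [apply HL; auto|]. exists (ylo pr), (yhi pr).
    assert (Hq : forall q, In q Px -> ylo pr <= q <= yhi pr -> q = p).
    { intros q Hq Hqb. destruct (Req_EM_T q p) as [E|E]; auto. exfalso. apply Hpr.
      exists q. split; auto. apply in_in_remove; auto. }
    destruct (Hpi pr Hin HI) as [y [Hy Hyb]].
    split; [|split; auto]. rewrite <- (Hq y Hy Hyb); auto. }
  set (g := fun p => epsilon (inhabits 0) (W p)).
  assert (Hg : forall p, In p Px -> W p (g p)).
  { intros p Hp. apply epsilon_spec. apply Hpriv; auto. }
  apply (count_bound g L Px HN).
  - intros p Hp. apply (Hg p Hp).
  - intros h Q HQ HQ'. apply len_le2; auto.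
    intros q1 q2 q3 H1 H2 H3 D12 D13 D23.
    destruct (HQ' q1 H1) as [I1 G1]. destruct (HQ' q2 H2) as [I2 G2]. destruct (HQ' q3 H3) as [I3 G3].
    destruct (Hg q1 I1) as [_ [a1 [b1 [A1 [B1 C1]]]]].
    destruct (Hg q2 I2) as [_ [a2 [b2 [A2 [B2 C2]]]]].
    destruct (Hg q3 I3) as [_ [a3 [b3 [A3 [B3 C3]]]]].
    rewrite G1 in B1. rewrite G2 in B2. rewrite G3 in B3.
    apply (three q1 q2 q3 h a1 b1 a2 b2 a3 b3); auto; apply notin_int; intro Hc';
      [ apply D12; symmetry; apply (C1 q2 I2 Hc')
      | apply D13; symmetry; apply (C1 q3 I3 Hc')
      | apply D12; apply (C2 q1 I1 Hc')
      | apply D23; symmetry; apply (C2 q3 I3 Hc')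
      | apply D13; apply (C3 q1 I1 Hc')
      | apply D23; apply (C3 q2 I2 Hc') ].
Qed.
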